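(* Let $G$ be a finite group, $H$ a subgroup of $G$ and $N$ a normal subgroup of $G$ with $NH=G$. Let $p$ be a prime dividing both $(G:H)$ and $(G:N)$, and let $P$ be a $p$-Sylow subgroup of $G$. If $g\in G$ satisfies $\mathrm{ord}_p(P:P\cap gHg^{-1})=\mathrm{ord}_p(G:H)$, then $(P\cap N)\cdot(P\cap gHg^{-1})=P$.
   Context: $\mathrm{ord}_p$ denotes the exponent of the prime $p$ in a positive integer. *)

(* Defs.v *)
From mathcomp Require Export all_boot all_fingroup all_solvable.

(* Main.v *)
Require Import Defs.
From mathcomp Require Import zify.
Import GroupScope.

Theorem lemma5p2 (gT : finGroupType) (G H N P : {group gT}) (p : nat) (g : gT) :
  H \subset G -> N <| G -> N * H = G ->
  prime p -> (p %| #|G : H|)%N -> (p %| #|G : N|)%N ->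
  P \in 'Syl_p(G) -> g \in G ->
  logn p #|P : P :&: H :^ g^-1| = logn p #|G : H| ->
  (P :&: N) * (P :&: H :^ g^-1) = P.
Proof.
move=> sHG nNG eNH pr _ _ sylP Gg hlog.
set K := (H :^ g^-1)%G.
have sylP' : p.-Sylow(G) P by rewrite inE in sylP.
have pP : p.-group P := pHall_pgroup sylP'.
have GgV : g^-1 \in G by rewrite groupV.
have sKG : K \subset G by rewrite /K /= -(conjGid GgV) conjSg.
have iKH : #|G : K| = #|G : H| by rewrite /K /= -{1}(conjGid GgV) indexJg.
have nN : K \subset 'N(N) by apply: subset_trans sKG (normal_norm nNG).
have eNK : K * N = G.
  rewrite (normC nN) /K /= -{1}(normP (subsetP (normal_norm nNG) _ GgV)).
  by rewrite -conjsMg eNH conjGid.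
have iNL : #|N : N :&: K| = #|G : H| by rewrite indexgI -iKH -eNK indexMg.
set Q := (P :&: N)%G.
set R := (P :&: K)%G.
have sylQ : p.-Sylow(N) (N :&: P) := Sylow_setI_normal nNG sylP'.
have eQ : Q = (N :&: P)%G by apply/val_inj; rewrite /= setIC.
have cQ : #|Q| = (#|N|`_p)%N by rewrite eQ (card_Hall sylQ).
have sQR : Q :&: R \subset N :&: K.
  by apply/subsetP=> x; rewrite !inE => /andP[/andP[_ ?] /andP[_ ?]]; apply/andP.
have pos := cardG_gt0.
have h1 : logn p #|Q :&: R| <= logn p #|N :&: K|.
  by apply: dvdn_leq_log; [exact: pos | exact: cardSg].
have h2 : logn p #|N| = logn p #|G : H| + logn p #|N :&: K|.
  rewrite -{1}(LagrangeI N K) -(indexgI N K) iNL lognM ?cardG_gt0 1?addnC //.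
have h3 : logn p #|P| = logn p #|G : H| + logn p #|R|.
  rewrite -{1}(LagrangeI P K) lognM ?indexg_gt0 // -(indexgI P K) hlog addnC //.
have lq : logn p #|Q| = logn p #|N| by rewrite cQ logn_part.
have pQR : p.-group (Q :&: R) := pgroupS (subset_trans (subsetIl _ _) (subsetIl _ _)) pP.
have pQ : p.-group Q := pgroupS (subsetIl _ _) pP.
have pR : p.-group R := pgroupS (subsetIl _ _) pP.
apply/eqP; rewrite eqEcard mul_subG ?subsetIl //=.
have M := mul_cardG Q R.
rewrite -(leq_pmul2r (pos _ (Q :&: R)%G)) -M.
rewrite (card_pgroup pP) (card_pgroup pQ) (card_pgroup pR) (card_pgroup pQR).
rewrite -!expnD leq_exp2l ?prime_gt1 //.
move: h1 h2 h3 lq => /= h1 h2 h3 ->.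
rewrite h3 h2 -!addnA leq_add2l addnC leq_add2r. exact h1. Qed.
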